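(* For any $x\in S\cap\mathbb{R}^n$, either there exists $x'\in S\cap\mathbb{R}^n$ such that $f(x')\le f(x)$ and the tangent digraph $\mathcal{G}(x')$ is connected, or $f$ is not bounded below on $S$.
   Context: $\mathbb{R}_{\max}=\mathbb{R}\cup\{-\infty\}$. Data: $A^\pm=(a^\pm_{i,j})\in\mathbb{R}_{\max}^{m\times n}$, $C=(c_{k,j})\in\mathbb{R}_{\max}^{p\times n}$, $\mu^+\in\mathbb{Z}_{\ge0}^p$, $\mu^-\in\mathbb{Z}_{\ge0}^n$; $A=(a_{i,j})$, $a_{i,j}=\max(a^+_{i,j},a^-_{i,j})$. $f(x)=\sum_k\mu^+_k\max_j(c_{k,j}+x_j)-\sum_j\mu^-_jx_j$; $S=\{x:\max_j(a^+_{i,j}+x_j)\ge\max_j(a^-_{i,j}+x_j)\ \forall i\in[m]\}$. Standing assumptions: each row of $A$ and $C$ has a finite entry; $\sum_k\mu^+_k=\sum_j\mu^-_j$; the undirected graph on $\{u_1..u_p\}\cup[n]\cup\{w_1..w_m\}$ with edges $\{u_k,j\}$ ($c_{k,j}\ne-\infty$) and $\{w_i,j\}$ ($a_{i,j}\ne-\infty$) is connected. The tangent digraph $\mathcal{G}(x)$ has vertices $U=\{u_1..u_p\}$, $V=[n]$, $W=\{w_1..w_m\}$ and edges $E_1(x)=\{(u_k,j):\max_{j'}(c_{k,j'}+x_{j'})=c_{k,j}+x_j\}$, $E_2(x)=\{(w_i,j):\max_{j'}(a_{i,j'}+x_{j'})=a^-_{i,j}+x_j\}$, $E_3(x)=\{(j,w_i):\max_{j'}(a_{i,j'}+x_{j'})=a^+_{i,j}+x_j\}$;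 connectedness refers to its underlying undirected graph. *)

(* Defs.v *)
From HB Require Import structures.
From mathcomp Require Import all_boot all_order all_algebra.
From mathcomp Require Import reals constructive_ereal.
Set Implicit Arguments. Unset Strict Implicit. Unset Printing Implicit Defensive.
Import Order.TTheory GRing.Theory Num.Theory.
Local Open Scope ring_scope.
Local Open Scope ereal_scope.

(* An element of R_max = R ∪ {-oo} is represented as [option R]
   (None = -oo); [emb] injects it into the extended reals. *)
Definition emb (R : realType) (a : option R) : \bar R :=
  if a is Some r then r%:E else -oo.

Definition tmax (R : realType) (n : nat) (a : 'I_n -> \bar R) (x : 'I_n -> R)
  : \bar R := \big[Order.max/-oo]_(j < n) (a j + (x j)%:E).

Section Data.
Variables (R : realType) (m n p : nat).
Variables (Ap Am : 'M[option R]_(m, n)) (C : 'M[option R]_(p, n)).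
Variables (mup : 'I_p -> nat) (mum : 'I_n -> nat).

Definition Aent (i : 'I_m) (j : 'I_n) : \bar R :=
  Order.max (emb (Ap i j)) (emb (Am i j)).

Definition rowA i (x : 'I_n -> R) := tmax (Aent i) x.
Definition rowAp i (x : 'I_n -> R) := tmax (fun j => emb (Ap i j)) x.
Definition rowAm i (x : 'I_n -> R) := tmax (fun j => emb (Am i j)) x.
Definition rowC k (x : 'I_n -> R) := tmax (fun j => emb (C k j)) x.

Definition fobj (x : 'I_n -> R) : \bar R :=
  \sum_(k < p) (rowC k x *+ mup k) - (\sum_(j < n) (x j *+ mum j))%R%:E.

Definition inS (x : 'I_n -> R) : Prop :=
  forall i : 'I_m, rowAm i x <= rowAp i x.

(* vertices: inl (inl k) = u_k, inl (inr j) = j, inr i = w_i *)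
Definition vert := ('I_p + 'I_n + 'I_m)%type.

Definition tedge (x : 'I_n -> R) (a b : vert) : bool :=
  match a, b with
  | inl (inl k), inl (inr j) => rowC k x == emb (C k j) + (x j)%:E
  | inr i, inl (inr j) => rowA i x == emb (Am i j) + (x j)%:E
  | inl (inr j), inr i => rowA i x == emb (Ap i j) + (x j)%:E
  | _, _ => false
  end.

Definition tangent_connected (x : 'I_n -> R) : Prop :=
  forall a b : vert, connect (fun u v => tedge x u v || tedge x v u) a b.

Definition sedge (a b : vert) : bool :=
  match a, b with
  | inl (inl k), inl (inr j) => C k j != None
  | inr i, inl (inr j) => (Ap i j != None) || (Am i j != None)
  | _, _ => false
  end.

Definition support_connected : Prop :=
  forall a b : vert, connect (fun u v => sedge u v || sedge v u) a b.

Definition rows_finite : Prop :=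
  (forall i : 'I_m, exists j : 'I_n, (Ap i j != None) || (Am i j != None)) /\
  (forall k : 'I_p, exists j : 'I_n, C k j != None).

End Data.

(* Main.v *)
Require Import Defs.
From HB Require Import structures.
From mathcomp Require Import all_boot all_order all_algebra.
From mathcomp Require Import reals constructive_ereal.
From mathcomp Require Import ring lra zify.
Set Implicit Arguments. Unset Strict Implicit. Unset Printing Implicit Defensive.
Import Order.TTheory GRing.Theory Num.Theory.
Local Open Scope ring_scope.
Local Open Scope ereal_scope.

Section RowLemmas.
Variables (R : realType) (n : nat) (e : 'I_n -> \bar R).

Lemma tmax_ge (x : 'I_n -> R) j : e j + (x j)%:E <= tmax e x.
Proof. by rewrite /tmax; apply: (@le_bigmax _ _ _ -oo (fun j => e j + (x j)%:E) j). Qed.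

Lemma tmax_leP (x : 'I_n -> R) M : tmax e x <= M <-> (forall j, e j + (x j)%:E <= M).
Proof.
split=> [H j|H]; first exact: le_trans (tmax_ge x j) H.
by apply/bigmax_leP; split=> [|i _]; [exact: leNye | exact: H].
Qed.

Lemma tmax_att (x : 'I_n -> R) (j0 : 'I_n) : exists j, tmax e x = e j + (x j)%:E.
Proof.
rewrite /tmax.
have [j _ ->] := @eq_bigmax _ _ _ -oo j0 xpredT (fun j => e j + (x j)%:E) isT
  (fun i _ => leNye _).
by exists j.
Qed.

Variables (x : 'I_n -> R) (D : pred 'I_n) (t : R).
Let xs := fun j => (x j + (if D j then t else 0))%R.

Lemma tmax_shift_in (j0 : 'I_n) : (0 <= t)%R ->
  (forall j, tmax e x = e j + (x j)%:E -> D j) ->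
  tmax e xs = tmax e x + t%:E.
Proof.
move=> t0 HD; apply/eqP; rewrite eq_le; apply/andP; split.
  apply/(tmax_leP xs) => j; rewrite /xs; case: (D j).
    by rewrite EFinD addeA; apply: leeD2r; exact: (tmax_ge x).
  rewrite addr0; apply: le_trans (tmax_ge x j) _; apply: leeDl; by rewrite lee_fin.
have [j1 Hj1] := tmax_att x j0.
rewrite Hj1; apply: le_trans (tmax_ge xs j1); rewrite /xs.
by rewrite (HD _ Hj1) EFinD addeA.
Qed.

Lemma tmax_shift_out (j0 : 'I_n) :
  (forall j, tmax e x = e j + (x j)%:E -> ~~ D j) ->
  (forall j, D j -> e j + (x j + t)%:E <= tmax e x) ->
  tmax e xs = tmax e x.
Proof.
move=> HD Hg; apply/eqP; rewrite eq_le; apply/andP; split.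
  apply/(tmax_leP xs) => j; rewrite /xs; case: ifP => Dj; first exact: Hg.
  rewrite addr0; exact: (tmax_ge x).
have [j1 Hj1] := tmax_att x j0.
rewrite Hj1; apply: le_trans (tmax_ge xs j1); rewrite /xs.
by rewrite (negbTE (HD _ Hj1)) addr0.
Qed.

End RowLemmas.
Arguments tmax_ge {R n} e x j.
Arguments tmax_leP {R n} e x M.
Arguments tmax_att {R n} e x j0.
Arguments tmax_shift_in {R n} e x D t j0.
Arguments tmax_shift_out {R n} e x D t j0.

Section Main.
Variables (R : realType) (m n p : nat).
Variables (Ap Am : 'M[option R]_(m, n)) (C : 'M[option R]_(p, n)).
Variables (mup : 'I_p -> nat) (mum : 'I_n -> nat).
Hypothesis rf : rows_finite Ap Am C.

Definition rowT := ('I_p + 'I_m)%type.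
Definition E (r : rowT) : 'I_n -> \bar R :=
  match r with inl k => fun j => emb (C k j) | inr i => Aent Ap Am i end.
Definition rowv (r : rowT) : vert m n p :=
  match r with inl k => inl (inl k) | inr i => inr i end.
Definition colv (j : 'I_n) : vert m n p := inl (inr j).
Definition G x (u v : vert m n p) := tedge Ap Am C x u v || tedge Ap Am C x v u.

Lemma n_gt0 (r : rowT) : (0 < n)%N.
Proof.
case: rf => [HA HC]; case: r => [k|i].
  by have [j _] := HC k; exact: leq_ltn_trans (leq0n j) (ltn_ord j).
by have [j _] := HA i; exact: leq_ltn_trans (leq0n j) (ltn_ord j).
Qed.

Definition j0 r : 'I_n := Ordinal (n_gt0 r).

Lemma emb_npinf (o : option R) : emb o != +oo.
Proof. by case: o. Qed.

Lemma Aent_cases i j : Aent Ap Am i j = emb (Ap i j) \/ Aent Ap Am i j = emb (Am i j).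
Proof. rewrite /Aent; case: leP => _; by [right | left]. Qed.

Lemma E_npinf r j : E r j != +oo.
Proof.
case: r => [k|i] /=; first exact: emb_npinf.
by case: (Aent_cases i j) => ->; exact: emb_npinf.
Qed.

Lemma emb_fin (o : option R) : o != None -> emb o \is a fin_num.
Proof. by case: o. Qed.

Lemma Ap_le_Aent i j : emb (Ap i j) <= Aent Ap Am i j.
Proof. by rewrite /Aent le_max lexx. Qed.

Lemma Am_le_Aent i j : emb (Am i j) <= Aent Ap Am i j.
Proof. by rewrite /Aent le_max lexx orbT. Qed.

Lemma fin_le (a b : \bar R) : a \is a fin_num -> b != +oo -> a <= b -> b \is a fin_num.
Proof.
move=> /fineK <- Hb Hab; rewrite fin_numE Hb andbT; apply/eqP => Hb'.
by rewrite Hb' leeNy_eq in Hab.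
Qed.

Lemma Aent_fin i j : (Ap i j != None) || (Am i j != None) ->
  Aent Ap Am i j \is a fin_num.
Proof.
have Hn : Aent Ap Am i j != +oo by case: (Aent_cases i j) => ->; exact: emb_npinf.
case/orP => H; apply: fin_le Hn _; [exact: emb_fin H | exact: Ap_le_Aent|
  exact: emb_fin H | exact: Am_le_Aent].
Qed.

Lemma E_fin r : exists j, E r j \is a fin_num.
Proof.
case: rf => [HA HC]; case: r => [k|i] /=.
  by have [j Hj] := HC k; exists j; exact: emb_fin.
by have [j Hj] := HA i; exists j; exact: Aent_fin.
Qed.

Lemma tmax_npinf r x : tmax (E r) x != +oo.
Proof.
have [j ->] := tmax_att (E r) x (j0 r).
have := E_npinf r j; case: (E r j) => //.
Qed.

Lemma tmax_fin r x : tmax (E r) x \is a fin_num.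
Proof.
have [j Hj] := E_fin r.
apply: fin_le (tmax_npinf r x) (tmax_ge (E r) x j).
by rewrite fin_numD Hj.
Qed.


Lemma edge_of r j x : tmax (E r) x = E r j + (x j)%:E -> G x (rowv r) (colv j).
Proof.
rewrite /G; case: r => [k|i] /= H.
  by rewrite /tedge /rowC H eqxx.
case: (Aent_cases i j) H => -> H; rewrite /tedge /rowA H eqxx //.
by rewrite orbT.
Qed.

Definition closedL x (L : pred (vert m n p)) :=
  forall a b, tedge Ap Am C x a b -> L a = L b.

Lemma closedG x L : closedL x L -> forall a b, G x a b -> L a = L b.
Proof. by move=> cl a b /orP[/cl|/cl ->]. Qed.

Lemma closedC x L : closedL x L -> closedL x (predC L).
Proof. by move=> cl a b /cl /= ->. Qed.

Definition dlt (L : pred (vert m n p)) (t : R) v : R := if L v then t else 0%R.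
Definition xsh (L : pred (vert m n p)) t (x : 'I_n -> R) :=
  fun j => (x j + dlt L t (colv j))%R.

Definition Gap L t x := forall r j, ~~ L (rowv r) -> L (colv j) ->
  E r j + (x j + t)%:E <= tmax (E r) x.

Section Shift.
Variables (x : 'I_n -> R) (L : pred (vert m n p)) (t : R).
Hypotheses (cl : closedL x L) (t0 : (0 <= t)%R) (gp : Gap L t x).

Lemma rowshift r : tmax (E r) (xsh L t x) = tmax (E r) x + (dlt L t (rowv r))%:E.
Proof.
rewrite /dlt; case: ifP => Lr.
  apply: (tmax_shift_in (E r) x (fun j => L (colv j)) t (j0 r) t0) => j Hj.
  by rewrite -(closedG cl (edge_of Hj)).
rewrite adde0.
apply: (tmax_shift_out (E r) x (fun j => L (colv j)) t (j0 r)) => [j Hj|j Lj].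
  by rewrite -(closedG cl (edge_of Hj)) Lr.
by apply: gp => //; rewrite Lr.
Qed.

Lemma edge_shift r j g : L (rowv r) = L (colv j) ->
  tmax (E r) x = g + (x j)%:E -> tmax (E r) (xsh L t x) = g + (xsh L t x j)%:E.
Proof.
move=> HL H; rewrite rowshift H /xsh EFinD addeA /dlt HL //.
Qed.

Lemma edges_pres a b : tedge Ap Am C x a b -> tedge Ap Am C (xsh L t x) a b.
Proof.
move=> Hab; have HL := cl Hab; move: Hab.
case: a HL => [[k|j]|i]; case: b => [[k'|j']|i'] //= HL /eqP H; apply/eqP.
- exact: (@edge_shift (inl k) j' _ HL H).
- exact: (@edge_shift (inr i') j _ (esym HL) H).
- exact: (@edge_shift (inr i) j' _ HL H).
Qed.

End Shift.


Lemma Ap_att x i : inS Ap Am x ->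
  exists j, rowA Ap Am i x = emb (Ap i j) + (x j)%:E.
Proof.
move=> HS; have [j Hj] := tmax_att (E (inr i)) x (j0 (inr i)).
have HpA : rowAp Ap i x <= rowA Ap Am i x.
  apply/(tmax_leP (fun j => emb (Ap i j))) => j'.
  by apply: le_trans (tmax_ge (E (inr i)) x j'); apply: leeD2r; exact: Ap_le_Aent.
case: (Aent_cases i j) Hj => /= He Hj.
  by exists j; rewrite /rowA Hj He.
have HAp : rowA Ap Am i x = rowAp Ap i x.
  apply/eqP; rewrite eq_le HpA andbT.
  rewrite /rowA Hj He; apply: le_trans (HS i).
  exact: (tmax_ge (fun j => emb (Am i j)) x j).
have [j1 Hj1] := tmax_att (fun j => emb (Ap i j)) x (j0 (inr i)).
by exists j1; rewrite HAp /rowAp Hj1.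
Qed.

Section Shift2.
Variables (x : 'I_n -> R) (L : pred (vert m n p)) (t : R).
Hypotheses (cl : closedL x L) (t0 : (0 <= t)%R) (gp : Gap L t x).

Lemma S_pres : inS Ap Am x -> inS Ap Am (xsh L t x).
Proof.
move=> HS i; have [j1 Hj1] := Ap_att i HS.
have HL : L (rowv (inr i)) = L (colv j1).
  apply: esym; apply: cl; by rewrite /= /tedge Hj1 eqxx.
have := edge_shift cl t0 gp HL Hj1 => /= H.
apply: le_trans (_ : rowA Ap Am i (xsh L t x) <= _).
  apply/(tmax_leP (fun j => emb (Am i j))) => j'.
  by apply: le_trans (tmax_ge (E (inr i)) _ j'); apply: leeD2r; exact: Am_le_Aent.
rewrite /rowA H; exact: (tmax_ge (fun j => emb (Ap i j))).
Qed.

End Shift2.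

Definition Fr (x : 'I_n -> R) : R :=
  (\sum_(k < p) fine (rowC C k x) *+ mup k - \sum_(j < n) x j *+ mum j)%R.

Lemma fobjE x : fobj C mup mum x = (Fr x)%:E.
Proof.
rewrite /fobj /Fr EFinB; congr (_ - _); rewrite -sumEFin.
apply: eq_bigr => k _; rewrite EFin_natmul; congr (_ *+ _).
by rewrite fineK //; exact: (tmax_fin (inl k) x).
Qed.

Definition sig (L : pred (vert m n p)) : R :=
  (\sum_(k < p) (if L (inl (inl k)) then 1 else 0) *+ mup k -
   \sum_(j < n) (if L (colv j) then 1 else 0) *+ mum j)%R.

Lemma F_shift x L t : closedL x L -> (0 <= t)%R -> Gap L t x ->
  Fr (xsh L t x) = (Fr x + t * sig L)%R.
Proof.
move=> cl t0 gp.
have Hk : forall k, fine (rowC C k (xsh L t x)) = (fine (rowC C k x) + dlt L t (inl (inl k)))%R.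
  move=> k; rewrite /rowC; have := rowshift cl t0 gp (inl k) => /= ->.
  by rewrite -[X in fine (X + _)](fineK (tmax_fin (inl k) x)) -EFinD /=.
rewrite /Fr /sig.
under eq_bigr => k _ do rewrite Hk mulrnDl.
rewrite /xsh; under [X in (_ - X)%R]eq_bigr => j _ do rewrite mulrnDl.
rewrite !big_split /=.
have -> : (\sum_(k < p) dlt L t (inl (inl k)) *+ mup k =
   t * \sum_(k < p) (if L (inl (inl k)) then 1 else 0) *+ mup k)%R.
  rewrite mulr_sumr; apply: eq_bigr => k _; rewrite /dlt mulrnAr.
  by case: (L _); rewrite ?mulr1 ?mulr0.
have -> : (\sum_(j < n) dlt L t (colv j) *+ mum j =
   t * \sum_(j < n) (if L (colv j) then 1 else 0) *+ mum j)%R.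
  rewrite mulr_sumr; apply: eq_bigr => j _; rewrite /dlt mulrnAr.
  by case: (L _); rewrite ?mulr1 ?mulr0.
by ring.
Qed.

Lemma sig_compl L : (\sum_(k < p) mup k)%N = (\sum_(j < n) mum j)%N ->
  (sig L + sig (predC L) = 0)%R.
Proof.
move=> hs; rewrite /sig.
have H1 : (\sum_(k < p) (if L (inl (inl k)) then 1 else 0) *+ mup k +
   \sum_(k < p) (if predC L (inl (inl k)) then 1 else 0) *+ mup k
   = (\sum_(k < p) mup k)%:R :> R)%R.
  rewrite -big_split natr_sum; apply: eq_bigr => i _ /=.
  by case: (L _); rewrite /= ?mul0rn ?addr0 ?add0r.
have H2 : (\sum_(j < n) (if L (colv j) then 1 else 0) *+ mum j +
   \sum_(j < n) (if predC L (colv j) then 1 else 0) *+ mum j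
   = (\sum_(j < n) mum j)%:R :> R)%R.
  rewrite -big_split natr_sum; apply: eq_bigr => i _ /=.
  by case: (L _); rewrite /= ?mul0rn ?addr0 ?add0r.
rewrite hs in H1; lra.
Qed.


Definition PL (L : pred (vert m n p)) (q : rowT * 'I_n) : bool :=
  ~~ L (rowv q.1) && L (colv q.2) && (E q.1 q.2 != -oo).
Definition gap x (q : rowT * 'I_n) : R :=
  (fine (tmax (E q.1) x) - (fine (E q.1 q.2) + x q.2))%R.

Lemma E_fin_of r j : E r j != -oo -> E r j \is a fin_num.
Proof. by move=> H; rewrite fin_numE H E_npinf. Qed.

Lemma gap_ok x q t : E q.1 q.2 != -oo ->
  (E q.1 q.2 + (x q.2 + t)%:E <= tmax (E q.1) x) = (t <= gap x q)%R.
Proof.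
move=> H; have hE := fineK (E_fin_of H); have hT := fineK (tmax_fin q.1 x).
rewrite -hE -hT -EFinD lee_fin /gap.
by apply/idP/idP => ?; lra.
Qed.

Lemma Gap_of x L t : (forall q, PL L q -> (t <= gap x q)%R) -> Gap L t x.
Proof.
move=> H r j Lr Lj; case: (eqVneq (E r j) -oo) => [->|Hn].
  by rewrite addNye leNye.
by rewrite (@gap_ok x (r, j) t Hn); apply: H; rewrite /PL /= Lr Lj Hn.
Qed.

Definition nE x := #|[set ab : vert m n p * vert m n p | tedge Ap Am C x ab.1 ab.2]|.

Lemma step x L q0 : closedL x L -> inS Ap Am x -> (sig L <= 0)%R -> PL L q0 ->
  exists x', [/\ inS Ap Am x', (Fr x' <= Fr x)%R & (nE x < nE x')%N].
Proof.
move=> cl HS Hs Pq0.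
case: (arg_minP (gap x) (P := PL L) Pq0) => q Pq Hmin.
set t := gap x q.
have HqE : E q.1 q.2 != -oo by move: Pq; rewrite /PL => /andP[].
have t0 : (0 <= t)%R.
  by rewrite -(@gap_ok x q 0 HqE) addr0; exact: tmax_ge.
have gp : Gap L t x := Gap_of (fun q' Pq' => Hmin q' Pq').
exists (xsh L t x); split.
- exact: S_pres.
- rewrite (F_shift cl t0 gp); have := mulr_ge0_le0 t0 Hs; lra.
- apply: proper_card; apply/properP; split.
    by apply/subsetP => ab; rewrite !inE; exact: edges_pres.
  have [Lr Lc] : ~~ L (rowv q.1) /\ L (colv q.2).
    by move: Pq; rewrite /PL => /andP[/andP[-> ->]].
  have Gn : ~~ G x (rowv q.1) (colv q.2).
    by apply/negP => /(closedG cl); rewrite Lc; apply/negP.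
  have Gs : G (xsh L t x) (rowv q.1) (colv q.2).
    apply: edge_of; rewrite (rowshift cl t0 gp) /dlt (negbTE Lr) adde0.
    rewrite /xsh /dlt Lc.
    have hE := fineK (E_fin_of HqE); have hT := fineK (tmax_fin q.1 x).
    rewrite -hE -hT -EFinD; congr (_%:E); rewrite /t /gap; ring.
  move: Gn Gs; rewrite /G negb_or => /andP[n1 n2] /orP[H|H].
    by exists (rowv q.1, colv q.2); rewrite !inE.
  by exists (colv q.2, rowv q.1); rewrite !inE.
Qed.

Lemma unb x L : closedL x L -> inS Ap Am x -> (forall q, ~~ PL L q) ->
  (sig L < 0)%R ->
  ~ (exists M : R, forall y, inS Ap Am y -> M%:E <= fobj C mup mum y).
Proof.
move=> cl HS HP Hs [M HM].
set t := ((`|Fr x - M| + 1) / (- sig L))%R.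
have t0 : (0 <= t)%R.
  apply: divr_ge0; last by lra.
  by have := normr_ge0 (Fr x - M)%R; lra.
have gp : Gap L t x.
  by apply: Gap_of => q Pq; move: (HP q); rewrite Pq.
have := HM (xsh L t x) (S_pres cl t0 gp HS).
rewrite fobjE lee_fin (F_shift cl t0 gp).
have ht : (t * sig L = - (`|Fr x - M| + 1))%R.
  rewrite /t; field; apply/eqP => H; lra.
rewrite ht; have := ler_norm (Fr x - M)%R; lra.
Qed.


Lemma support_cross L : support_connected Ap Am C ->
  (forall q, ~~ PL L q) -> (forall q, ~~ PL (predC L) q) ->
  forall a b, L a -> L b.
Proof.
move=> sc H1 H2 a b La.
have cross : forall r j, E r j != -oo -> L (rowv r) = L (colv j).
  move=> r j Hn; move: (H1 (r, j)) (H2 (r, j)); rewrite /PL /= Hn !andbT.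
  by case: (L (rowv r)); case: (L (colv j)).
have fin_ne : forall r j, E r j \is a fin_num -> E r j != -oo.
  by move=> r j; rewrite fin_numE => /andP[].
have cs : forall u v, sedge Ap Am C u v -> L u = L v.
  case=> [[k|j]|i]; case=> [[k'|j']|i'] //= H.
    by apply: (cross (inl k) j'); apply: fin_ne; exact: emb_fin.
  by apply: (cross (inr i) j'); apply: fin_ne; exact: Aent_fin.
have clS : closed (fun u v => sedge Ap Am C u v || sedge Ap Am C v u) L.
  by move=> u v /orP[/cs H|/cs H]; rewrite !unfold_in /= H.
have := closed_connect clS (sc a b).
by rewrite !unfold_in /= La => <-.
Qed.

Definition Bounded := exists M : R, forall y, inS Ap Am y -> M%:E <= fobj C mup mum y.

Hypothesis hs : (\sum_(k < p) mup k)%N = (\sum_(j < n) mum j)%N.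
Hypothesis sc : support_connected Ap Am C.

Lemma progress x L : closedL x L -> (exists u, L u) -> (exists v, ~~ L v) ->
  (sig L <= 0)%R -> inS Ap Am x -> Bounded ->
  exists x', [/\ inS Ap Am x', (Fr x' <= Fr x)%R & (nE x < nE x')%N].
Proof.
move=> cl [u Lu] [v Lv] Hs HS Hb.
case: (pickP (PL L)) => [q Pq|P0]; first exact: (step cl HS Hs Pq).
have P0' : forall q, ~~ PL L q by move=> q; rewrite P0.
have [Hlt|Hge] := boolP (sig L < 0)%R.
  by exfalso; exact: (unb cl HS P0' Hlt Hb).
have Hz : sig L = 0%R by move: Hge; rewrite -leNgt => ?; lra.
have Hz' : sig (predC L) = 0%R by have := sig_compl L hs; lra.
case: (pickP (PL (predC L))) => [q Pq|P1].
  by apply: (step (closedC cl) HS _ Pq); lra.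
have P1' : forall q, ~~ PL (predC L) q by move=> q; rewrite P1.
by have := support_cross sc P0' P1' v Lu; rewrite (negbTE Lv).
Qed.

Lemma main_ind : Bounded -> forall k x,
  (#|[set: vert m n p * vert m n p]| - nE x < k)%N -> inS Ap Am x ->
  exists x', [/\ inS Ap Am x', (Fr x' <= Fr x)%R & tangent_connected Ap Am C x'].
Proof.
move=> Hb; elim => [//|k IH] x Hk HS.
case: (boolP [forall a, forall b, connect (G x) a b]) => Hc.
  exists x; split => // a b.
  by move/forallP: Hc => /(_ a) /forallP /(_ b).
move: Hc; rewrite negb_forall => /existsP [a]; rewrite negb_forall => /existsP [b Hab].
pose L := fun v => connect (G x) a v.
have cl : closedL x L.
  move=> u v H; rewrite /L; apply/idP/idP => Hu.
    by apply: connect_trans Hu (connect1 _); rewrite /G H.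
  by apply: connect_trans Hu (connect1 _); rewrite /G H orbT.
have La : L a by exact: connect0.
have Lb : ~~ L b by [].
have [x'' [HS'' HF HnE]] : exists x', [/\ inS Ap Am x', (Fr x' <= Fr x)%R & (nE x < nE x')%N].
  case: (lerP (sig L) 0) => Hs.
    by apply: (progress cl _ _ Hs HS Hb); [exists a | exists b].
  apply: (progress (closedC cl) _ _ _ HS Hb); [exists b | exists a | ] => //=.
    by rewrite La.
  by have := sig_compl L hs; lra.
have Hk'' : (#|[set: vert m n p * vert m n p]| - nE x'' < k)%N.
  have Hle : (nE x'' <= #|[set: vert m n p * vert m n p]|)%N.
    by apply: subset_leq_card; apply: subsetT.
  lia.
have [x' [HS' HF' Hc']] := IH x'' Hk'' HS''.
by exists x'; split => //; lra.
Qed.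

End Main.

From Stdlib Require Import Classical.

Theorem proposition4p2 (R : realType) (m n p : nat)
  (Ap Am : 'M[option R]_(m, n)) (C : 'M[option R]_(p, n))
  (mup : 'I_p -> nat) (mum : 'I_n -> nat) :
  rows_finite Ap Am C ->
  (\sum_(k < p) mup k)%N = (\sum_(j < n) mum j)%N ->
  support_connected Ap Am C ->
  forall x : 'I_n -> R, inS Ap Am x ->
    (exists x' : 'I_n -> R,
        [/\ inS Ap Am x', fobj C mup mum x' <= fobj C mup mum x
          & tangent_connected Ap Am C x'])
    \/ ~ (exists M : R, forall y : 'I_n -> R, inS Ap Am y -> M%:E <= fobj C mup mum y).
Proof.
move=> rf hs sc x HS.
case: (classic (exists M : R, forall y : 'I_n -> R, inS Ap Am y -> M%:E <= fobj C mup mum y)) => Hb; last by right.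
left.
have [x' [HS' HF Hc]] := main_ind rf hs sc Hb (ltnSn _) HS.
by exists x'; split => //; rewrite !(fobjE mup mum rf) lee_fin.
Qed.
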